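(* Let $m_1,m_2\ge 3$ be integers, $m=m_1m_2$, and let $E$ be the $m_2\times m_2$ forward shift matrix (ones on the first superdiagonal, zeros elsewhere). Let $B_0,B_1$ be any real $m_1\times m_1$ matrices and define the $m\times m$ matrix \[ B=I\otimes B_0+E\otimes B_1+E^{\mathrm T}\otimes B_1^{\mathrm T}. \] Then \[ \mu_2[B]\le \max_{\zeta\in\mathbb C,\ |\zeta|=1}\ \mu_2[B_0+2\zeta B_1]. \]
   Context: $\otimes$ is the Kronecker product and $I$ the $m_2\times m_2$ identity. For a complex $k\times k$ matrix $A$, the logarithmic spectral norm is $\mu_2[A]=\lim_{t\downarrow 0}(\|I+tA\|_2-1)/t$, where $\|\cdot\|_2$ is the spectral norm; equivalently $\mu_2[A]$ is the largest eigenvalue of $\tfrac12(A+A^* )$. *)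

(* Defs.v *)
From HB Require Import structures.
From mathcomp Require Import all_boot all_order all_algebra.
From mathcomp Require Import complex mxtens.
From mathcomp Require Import classical_sets reals.
Set Implicit Arguments. Unset Strict Implicit. Unset Printing Implicit Defensive.
Import Order.TTheory GRing.Theory Num.Theory.
Local Open Scope ring_scope.
Local Open Scope complex_scope.

Definition cmx (R : realType) (m n : nat) (A : 'M[R]_(m, n)) : 'M[R[i]]_(m, n) :=
  map_mx (real_complex R) A.

Definition ctrmx (R : realType) (m n : nat) (A : 'M[R[i]]_(m, n)) : 'M[R[i]]_(n, m) :=
  (map_mx (@conjc R) A)^T.

Definition herm_part (R : realType) (k : nat) (A : 'M[R[i]]_k) : 'M[R[i]]_k :=
  (2%:R)^-1 *: (A + ctrmx A).

(* logarithmic spectral norm: largest eigenvalue of the (Hermitian) matrix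
   (A + ctrmx A) / 2; its eigenvalues are real, so we take their real parts. *)
Definition mu2 (R : realType) (k : nat) (A : 'M[R[i]]_k) : R :=
  sup [set complex.Re z | z in [set z | eigenvalue (herm_part A) z]]%classic.

Definition shiftE (R : realType) (n : nat) : 'M[R]_n :=
  \matrix_(i < n, j < n) ((j == i.+1 :> nat)%:R).

(* Main.v *)
Require Import Defs.
From HB Require Import structures.
From mathcomp Require Import all_boot all_order all_algebra.
From mathcomp Require Import complex mxtens spectral sesquilinear.
From mathcomp Require Import classical_sets reals.
From mathcomp Require Import ring lra zify.
Import Order.TTheory GRing.Theory Num.Theory Num.Def.
Set Implicit Arguments. Unset Strict Implicit. Unset Printing Implicit Defensive.
Local Open Scope ring_scope.
Local Open Scope complex_scope.

Section Main.
Variable R : realType.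
Local Notation C := R[i].

Definition qf n (M : 'M[C]_n) (x : 'rV[C]_n) : C := (x *m M *m ctrmx x) 0 0.

Lemma ctrmxE m n (A : 'M[C]_(m, n)) : ctrmx A = (A ^t conjC)%sesqui.
Proof. by rewrite /ctrmx map_trmx. Qed.

Lemma ctrmxK m n (A : 'M[C]_(m, n)) : ctrmx (ctrmx A) = A.
Proof. by apply/matrixP => i j; rewrite !mxE conjcK. Qed.

Lemma ctrmx_mul m n p (A : 'M[C]_(m, n)) (B : 'M[C]_(n, p)) :
  ctrmx (A *m B) = ctrmx B *m ctrmx A.
Proof. by rewrite /ctrmx map_mxM trmx_mul. Qed.

Lemma nrm_ge0 n (x : 'rV[C]_n) : 0 <= qf 1%:M x.
Proof.
rewrite /qf mulmx1 !mxE; apply: sumr_ge0 => i _; rewrite !mxE.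
by rewrite -sqr_normc exprn_ge0.
Qed.

Lemma nrm_gt0 n (x : 'rV[C]_n) : x != 0 -> 0 < qf 1%:M x.
Proof.
move=> xn0; have [j xj] : exists j, x 0 j != 0.
  apply/existsP; apply: contraNT xn0 => /existsPn H; apply/eqP/rowP => j.
  by rewrite mxE; apply/eqP/negPn/H.
rewrite /qf mulmx1 !mxE (bigD1 j) //= ltr_wpDr //.
  by apply: sumr_ge0 => i _; rewrite !mxE -sqr_normc exprn_ge0.
by rewrite !mxE -sqr_normc exprn_gt0 // normr_gt0.
Qed.

Lemma herm_part_herm n (A : 'M[C]_n) : herm_part A \is hermsymmx.
Proof.
apply/is_hermitianmxP; rewrite expr0 scale1r; apply/matrixP=> i j.
rewrite !mxE rmorphM rmorphD fmorphV /= rmorph_nat conjCK [in RHS]addrC.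
done.
Qed.

Lemma herm_spec n (A : 'M[C]_n) : (0 < n)%N ->
  exists v : 'rV[C]_n, [/\ v != 0, v *m herm_part A = (mu2 A)%:C *: v &
     forall x : 'rV[C]_n, qf (herm_part A) x <= (mu2 A)%:C * qf 1%:M x].
Proof.
move=> n0; set H := herm_part A.
have hH : H \is hermsymmx := herm_part_herm A.
set P := spectralmx H; set d := spectral_diag H.
have Pu : P \is unitarymx := spectral_unitarymx H.
have PU : P \in unitmx := unitarymx_unit Pu.
have HE : H = invmx P *m diag_mx d *m P.
  by apply/orthomx_spectralP; apply: hermitian_normalmx.
have iP : invmx P = ctrmx P by rewrite invmx_unitary // ctrmxE.
have dreal : forall j, d 0 j = (complex.Re (d 0 j))%:C.
  move=> j; rewrite complexRe; apply/esym/Creal_ReP.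
  by have /mxOverP := hermitian_spectral_diag_real hH; apply.
have [j0 _ Hj0] := @Order.TotalTheory.arg_maxP _ R _ (Ordinal n0) xpredT
   (fun j => complex.Re (d 0 j)) isT.
set lam := complex.Re (d 0 j0).
have ray : forall x : 'rV[C]_n, qf H x <= lam%:C * qf 1%:M x.
  move=> x; set u := x *m ctrmx P.
  have -> : qf H x = qf (diag_mx d) u.
    rewrite /qf /u ctrmx_mul ctrmxK HE iP !mulmxA //.
  have -> : qf 1%:M x = qf 1%:M u.
    rewrite /qf /u ctrmx_mul ctrmxK !mulmx1 -!mulmxA [ctrmx P *m (P *m _)]mulmxA.
    by rewrite -iP mulVmx // mul1mx.
  rewrite /qf mulmx1 mul_mx_diag !mxE mulr_sumr; apply: ler_sum => j _.
  rewrite !mxE mulrAC -sqr_normc mulrC; apply: ler_wpM2r; first exact: exprn_ge0.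
  by rewrite dreal lecR; apply: Hj0.
set v := row j0 P.
have vH : v *m H = lam%:C *: v.
  rewrite /v -row_mul HE iP !mulmxA -iP mulmxV // mul1mx mul_diag_mx.
  by apply/rowP => k; rewrite !mxE -dreal.
have vn0 : v != 0.
  apply/negP => /eqP v0.
  have : row j0 (P *m ctrmx P) = 0 by rewrite row_mul -/v v0 mul0mx.
  rewrite ctrmxE (unitarymxP Pu) => /rowP /(_ j0); rewrite !mxE eqxx /=.
  by move=> /eqP; rewrite oner_eq0.
have mu2E : mu2 A = lam.
  rewrite /mu2 -/H.
  set S := [set _ | _ in _]%classic.
  have ub : ubound S lam.
    move=> y [z /= /eigenvalueP [w wH wn0] <-].
    have q0 := nrm_gt0 wn0.
    have : z * qf 1%:M w <= lam%:C * qf 1%:M w.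
      have <- : qf H w = z * qf 1%:M w.
        by rewrite /qf wH mulmx1 -scalemxAl mxE.
      exact: ray.
    rewrite ler_pM2r // lecE => /andP [_]; done.
  have Slam : S lam.
    exists lam%:C => //=; apply/eigenvalueP; exists v => //.
  apply/le_anti/andP; split; first by apply: ge_sup => //; exists lam.
  by apply: ub_le_sup => //; exists lam.
by exists v; rewrite mu2E; split.
Qed.

Fixpoint zroot (p : nat) : C :=
  if p is p'.+1 then sqrtC (zroot p') else -1.

Lemma zrootE p : zroot p ^+ (2 ^ p) = -1.
Proof.
elim: p => [|p IH] /=; first by rewrite expn0 expr1.
by rewrite expnS exprM sqrtCK.
Qed.

Lemma zroot_prim p : (2 ^ p.+1).-primitive_root (zroot p).
Proof.
have z1 : zroot p ^+ (2 ^ p.+1) = 1.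
  by rewrite expnS mulnC exprM zrootE expr2 mulrNN mulr1.
have [m mp mdvd] := prim_order_exists (expn_gt0 2 p.+1) z1.
have [j jle mE] := dvdn_pfactor m p.+1 (isT : prime 2) mdvd.
suff -> : (2 ^ p.+1)%N = m by [].
rewrite mE; congr (2 ^ _)%N; apply/eqP; rewrite eqn_leq jle andbT leqNgt.
apply/negP => jp; have : (m %| 2 ^ p)%N by rewrite mE dvdn_exp2l // -ltnS.
rewrite (prim_order_dvd mp) zrootE => /eqP H.
have : (2%:R : C) == 0 by rewrite -[2%:R]/(1 + 1) -{1}H addNr.
by rewrite pnatr_eq0.
Qed.

Lemma dvd_aux a c N : (0 < N)%N -> (a < N)%N -> (c < N)%N ->
  (N %| a + c * (N - 1))%N = (a == c).
Proof.
move=> N0 aN cN.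
have e : (c * (N - 1) + c = c * N)%N by rewrite -mulnSr subn1 prednK.
apply/idP/eqP => [/dvdnP [q Hq]|->].
  have h : (q * N + c = a + c * N)%N by lia.
  case: (ltngtP q c) => qc.
  - have := leq_mul qc (leqnn N); rewrite mulSn; lia.
  - have := leq_mul qc (leqnn N); rewrite mulSn; lia.
  - by move: h; rewrite qc addnC => /addIn.
by apply/dvdnP; exists c; lia.
Qed.

Lemma orth p a c : let N := (2 ^ p.+1)%N in (a < N)%N -> (c < N)%N ->
  \sum_(k < N) (zroot p ^+ k) ^+ a * conjc ((zroot p ^+ k) ^+ c)
  = (a == c)%:R * N%:R.
Proof.
move=> N aN cN; set w := zroot p.
have wN : w ^+ N = 1 by apply/eqP; rewrite -(prim_order_dvd (zroot_prim p)).
have N0 : (0 < N)%N by rewrite expn_gt0.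
have cj : forall y : C, y ^+ N = 1 -> conjc y = y ^+ (N - 1).
  move=> y yN.
  have ny : `|y| = 1.
    apply/eqP; rewrite -(pexpr_eq1 N0) ?normr_ge0 // -normrX yN normr1 //.
  have yc : y * conjc y = 1 by rewrite -sqr_normc ny expr1n.
  have yy : y * y ^+ (N - 1) = 1 by rewrite -exprS subn1 prednK.
  by rewrite -[conjc y]mulr1 -yy mulrA [conjc y * y]mulrC yc mul1r.
set e := (a + c * (N - 1))%N.
have term : forall k : 'I_N, (w ^+ k) ^+ a * conjc ((w ^+ k) ^+ c) = (w ^+ e) ^+ k.
  move=> k; rewrite cj; last by rewrite exprAC [(w ^+ k) ^+ N]exprAC wN !expr1n.
  by rewrite -!exprM -exprD; congr (w ^+ _); rewrite /e; nia.
rewrite (eq_bigr _ (fun k _ => term k)).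
have [ac|ac] := eqVneq a c.
  have -> : w ^+ e = 1.
    apply/eqP; rewrite -(prim_order_dvd (zroot_prim p)) -/N /e.
    by rewrite dvd_aux // ac.
  by rewrite (eq_bigr (fun=> 1)) ?sumr_const ?card_ord ?mul1r // => k _; rewrite expr1n.
rewrite mul0r; set z := w ^+ e.
have z1 : z != 1.
  by rewrite /z -(prim_order_dvd (zroot_prim p)) -/N /e dvd_aux // ac.
have zN : z ^+ N = 1 by rewrite /z -exprM mulnC exprM wN expr1n.
have := subrX1 z N; rewrite zN subrr => /esym /eqP; rewrite mulf_eq0 subr_eq0.
by rewrite (negPf z1) /= => /eqP.
Qed.

Lemma qfE n (M : 'M[C]_n) x :
  qf M x = \sum_p \sum_q x 0 p * M p q * conjc (x 0 q).
Proof.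
rewrite /qf mxE (eq_bigr (fun q => \sum_p x 0 p * M p q * conjc (x 0 q))).
  exact: exchange_big.
by move=> q _; rewrite mxE mulr_suml; apply: eq_bigr => p _; rewrite !mxE.
Qed.

Lemma sum_tens m2 m1 (F : 'I_(m2 * m1) -> C) :
  \sum_p F p = \sum_(i < m2) \sum_(l < m1) F (mxtens_index (i, l)).
Proof.
rewrite (reindex (@mxtens_index m2 m1)) /=; last first.
  by apply: onW_bij; exists (@mxtens_unindex m2 m1);
    [exact: mxtens_indexK | exact: mxtens_unindexK].
by rewrite pair_big /=; apply: eq_bigr => [[i l]] _.
Qed.

Lemma qf_split m2 m1 (M : 'M[C]_(m2 * m1)) v :
  qf M v = \sum_(i < m2) \sum_(l < m1) \sum_(i' < m2) \sum_(l' < m1)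
    v 0 (mxtens_index (i, l)) * M (mxtens_index (i, l)) (mxtens_index (i', l'))
      * conjc (v 0 (mxtens_index (i', l'))).
Proof.
rewrite qfE sum_tens; apply: eq_bigr => i _; apply: eq_bigr => l _.
by rewrite sum_tens.
Qed.

Lemma expand m2 m1 N (z : 'I_N -> C) (G : 'I_N -> 'M[C]_m1)
  (X : 'I_m2 -> 'I_m1 -> C) :
  \sum_(k < N) qf (G k) (\row_l \sum_(i < m2) z k ^+ i * X i l) =
  \sum_(i < m2) \sum_(l < m1) \sum_(i' < m2) \sum_(l' < m1)
    X i l * (\sum_(k < N) z k ^+ i * conjc (z k ^+ i') * G k l l')
      * conjc (X i' l').
Proof.
have E1 : forall k, qf (G k) (\row_l \sum_(i < m2) z k ^+ i * X i l) =
  \sum_(l < m1) \sum_(l' < m1) \sum_(i < m2) \sum_(i' < m2)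
    z k ^+ i * X i l * G k l l' * conjc (z k ^+ i' * X i' l').
  move=> k; rewrite qfE; apply: eq_bigr => l _; apply: eq_bigr => l' _.
  rewrite !mxE rmorph_sum big_distrl /= big_distrl /=; apply: eq_bigr => i _.
  by rewrite big_distrr.
under eq_bigr do rewrite E1.
rewrite exchange_big /=.
under eq_bigr do rewrite exchange_big /=.
under eq_bigr do under eq_bigr do rewrite exchange_big /=.
under eq_bigr do under eq_bigr do under eq_bigr do rewrite exchange_big /=.
(* order now: l l' i i' k *)
under eq_bigr do rewrite exchange_big /=.
rewrite exchange_big /=.
under eq_bigr do under eq_bigr do rewrite exchange_big /=.
apply: eq_bigr => i _; apply: eq_bigr => l _; apply: eq_bigr => i' _.
apply: eq_bigr => l' _.
rewrite big_distrr big_distrl /=; apply: eq_bigr => k _.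
rewrite rmorphM /=; ring.
Qed.

Lemma Bentry m2 m1 (B0 B1 : 'M[R]_m1) (i i' : 'I_m2) (l l' : 'I_m1) :
  ((1%:M : 'M[R]_m2) *t B0 + shiftE R m2 *t B1 + (shiftE R m2)^T *t B1^T)
    (mxtens_index (i, l)) (mxtens_index (i', l')) =
  (i == i')%:R * B0 l l' + (i' == i.+1 :> nat)%:R * B1 l l'
    + (i == i'.+1 :> nat)%:R * B1 l' l.
Proof.
by rewrite mxE [X in X + _]mxE !tensmxE !mxE.
Qed.

Lemma norm_zroot p : `|zroot p| = 1.
Proof.
have wN : zroot p ^+ (2 ^ p.+1) = 1.
  by apply/eqP; rewrite -(prim_order_dvd (zroot_prim p)).
apply/eqP; rewrite -(pexpr_eq1 (expn_gt0 2 p.+1)) ?normr_ge0 //.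
by rewrite -normrX wN normr1.
Qed.

Lemma conjcD (x y : C) : conjc (x + y) = conjc x + conjc y.
Proof. exact: rmorphD. Qed.
Lemma conjcM (x y : C) : conjc (x * y) = conjc x * conjc y.
Proof. exact: rmorphM. Qed.
Lemma conjcR (x : R) : conjc (x%:C) = x%:C.
Proof. exact: conjc_real. Qed.
Lemma conjcN (n : nat) : conjc (n%:R : C) = n%:R.
Proof. by rewrite rmorph_nat. Qed.

Lemma hermE n (A : 'M[C]_n) p q :
  herm_part A p q = 2^-1 * (A p q + conjc (A q p)).
Proof. by rewrite !mxE. Qed.
Lemma cmxE m n (A : 'M[R]_(m, n)) p q : cmx A p q = (A p q)%:C.
Proof. by rewrite !mxE. Qed.
Lemma rcD (x y : R) : (x + y)%:C = x%:C + y%:C :> C.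
Proof. exact: rmorphD. Qed.
Lemma rcM (x y : R) : (x * y)%:C = x%:C * y%:C :> C.
Proof. exact: rmorphM. Qed.
Lemma rcN (n : nat) : (n%:R : R)%:C = n%:R :> C.
Proof. exact: rmorph_nat. Qed.

Lemma identA m2 m1 (B0 B1 : 'M[R]_m1) p (i i' : 'I_m2) (l l' : 'I_m1) :
  (m2 < 2 ^ p.+1)%N ->
  \sum_(k < 2 ^ p.+1) (zroot p ^+ k) ^+ i * conjc ((zroot p ^+ k) ^+ i') *
    herm_part (cmx B0 + (2%:R * zroot p ^+ k) *: cmx B1) l l' =
  (2 ^ p.+1)%:R * herm_part (cmx ((1%:M : 'M[R]_m2) *t B0 + shiftE R m2 *t B1
      + (shiftE R m2)^T *t B1^T)) (mxtens_index (i, l)) (mxtens_index (i', l')).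
Proof.
move=> hN; set N := (2 ^ p.+1)%N; set w := zroot p.
have K : forall k : 'I_N,
  herm_part (cmx B0 + (2%:R * w ^+ k) *: cmx B1) l l' =
  2^-1 * ((B0 l l')%:C + (B0 l' l)%:C) + w ^+ k * (B1 l l')%:C
    + conjc (w ^+ k) * (B1 l' l)%:C.
  move=> k; rewrite !mxE conjcD !conjcM !conjcR conjcN.
  by field.
have iN : (i < N)%N := ltn_trans (ltn_ord i) hN.
have i'N : (i' < N)%N := ltn_trans (ltn_ord i') hN.
have iSN : (i.+1 < N)%N := leq_ltn_trans (ltn_ord i) hN.
have i'SN : (i'.+1 < N)%N := leq_ltn_trans (ltn_ord i') hN.
rewrite (eq_bigr (fun k : 'I_N =>
   2^-1 * ((B0 l l')%:C + (B0 l' l)%:C) * ((w ^+ k) ^+ i * conjc ((w ^+ k) ^+ i'))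
   + (B1 l l')%:C * ((w ^+ k) ^+ i.+1 * conjc ((w ^+ k) ^+ i'))
   + (B1 l' l)%:C * ((w ^+ k) ^+ i * conjc ((w ^+ k) ^+ i'.+1)))); last first.
  by move=> k _; rewrite K !exprSr conjcM; ring.
rewrite !big_split /= -!mulr_sumr !orth //.
rewrite hermE !cmxE !Bentry !rcD !rcM !rcN !conjcD !conjcM !conjcR !conjcN.
rewrite [(i' == i)]eq_sym [(i' == i.+1 :> nat)]eq_sym.
have -> : (i == i' :> nat) = (i == i') by [].
by rewrite /N; field.
Qed.

Lemma identB m2 m1 p (i i' : 'I_m2) (l l' : 'I_m1) :
  (m2 < 2 ^ p.+1)%N ->
  \sum_(k < 2 ^ p.+1) (zroot p ^+ k) ^+ i * conjc ((zroot p ^+ k) ^+ i') *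
    (1%:M : 'M[C]_m1) l l' =
  (2 ^ p.+1)%:R * (1%:M : 'M[C]_(m2 * m1)) (mxtens_index (i, l))
     (mxtens_index (i', l')).
Proof.
move=> hN; have iN : (i < 2 ^ p.+1)%N := ltn_trans (ltn_ord i) hN.
have i'N : (i' < 2 ^ p.+1)%N := ltn_trans (ltn_ord i') hN.
rewrite -big_distrl /= orth // !mxE (inj_eq (can_inj (@mxtens_indexK _ _))).
rewrite xpair_eqE.
have -> : (i == i' :> nat) = (i == i') by [].
by case: (i == i'); case: (l == l'); rewrite /=; ring.
Qed.

End Main.

Theorem lemma2p2 (R : realType) (m1 m2 : nat) (hm1 : (3 <= m1)%N) (hm2 : (3 <= m2)%N)
    (B0 B1 : 'M[R]_m1) :
  let E := shiftE R m2 in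
  let B : 'M[R]_(m2 * m1) :=
    (1%:M : 'M[R]_m2) *t B0 + E *t B1 + E^T *t B1^T in
  exists zeta : R[i], `|zeta| = 1 /\
    mu2 (cmx B) <= mu2 (cmx B0 + (2%:R * zeta) *: cmx B1).
Proof.
move=> E B.
set N := (2 ^ m2.+1)%N.
have hN : (m2 < N)%N by apply: ltnW; apply: ltn_expl.
have N0 : (0 < N)%N by rewrite expn_gt0.
set w := zroot R m2.
have m1p : (0 < m1)%N by apply: leq_trans hm1.
have mp : (0 < m2 * m1)%N by rewrite muln_gt0 m1p andbT; apply: leq_trans hm2.
pose Kmat := fun k : 'I_N => cmx B0 + (2%:R * w ^+ k) *: cmx B1.
have [k0 _ Hk0] := @Order.TotalTheory.arg_maxP _ R _ (Ordinal N0) xpredT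
   (fun k => mu2 (Kmat k)) isT.
exists (w ^+ k0); split; first by rewrite normrX norm_zroot expr1n.
have [v [vn0 vH _]] := herm_spec (cmx B) mp.
have ray : forall k x, qf (herm_part (Kmat k)) x <= (mu2 (Kmat k))%:C * qf 1%:M x.
  by move=> k x; have [_ [_ _]] := herm_spec (Kmat k) m1p; apply.
set lam := mu2 (cmx B).
set mu := mu2 (Kmat k0).
pose X := fun i l => v 0 (mxtens_index (i, l)).
pose W := fun k : 'I_N => \row_l \sum_(i < m2) (w ^+ k) ^+ i * X i l.
have qH : qf (herm_part (cmx B)) v = lam%:C * qf 1%:M v.
  by rewrite /qf vH mulmx1 -scalemxAl mxE.
have S1 : \sum_k qf (herm_part (Kmat k)) (W k) = N%:R * qf (herm_part (cmx B)) v.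
  rewrite (expand (fun k => w ^+ k) (fun k => herm_part (Kmat k)) X) qf_split.
  rewrite mulr_sumr; apply: eq_bigr => i _; rewrite mulr_sumr.
  apply: eq_bigr => l _; rewrite mulr_sumr; apply: eq_bigr => i' _.
  rewrite mulr_sumr; apply: eq_bigr => l' _.
  rewrite /Kmat identA // /X; ring.
have S2 : \sum_k qf 1%:M (W k) = N%:R * qf 1%:M v.
  rewrite (expand (fun k => w ^+ k) (fun k => 1%:M) X) qf_split.
  rewrite mulr_sumr; apply: eq_bigr => i _; rewrite mulr_sumr.
  apply: eq_bigr => l _; rewrite mulr_sumr; apply: eq_bigr => i' _.
  rewrite mulr_sumr; apply: eq_bigr => l' _.
  rewrite identB // /X; ring.
have ineq : N%:R * qf (herm_part (cmx B)) v <= mu%:C * (N%:R * qf 1%:M v).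
  rewrite -S1 -S2 mulr_sumr; apply: ler_sum => k _.
  apply: le_trans (ray k (W k)) _; apply: ler_wpM2r; first exact: nrm_ge0.
  by rewrite lecR; apply: Hk0.
move: ineq; rewrite qH mulrCA ler_pM2r ?lecR //.
by rewrite mulr_gt0 ?ltr0n ?nrm_gt0.
Qed.
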